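(* Let $(p_n),(q_n)$ be sequences in $[0,1]$. If $P(n,p_n,q_n)=o(n^{-1})$, then for any $\alpha>0$, $P(\lfloor\alpha n\rfloor,p_n,q_n)\to0$ as $n\to\infty$.
   Context: For integers $m,n\ge0$ and $p,q\in[0,1]$, $P(m,n,p,q)=\Pr(Y\ge X)$ where $X\sim\mathrm{Binom}(m,\max\{p,q\})$ and $Y\sim\mathrm{Binom}(n,\min\{p,q\})$ are independent; $P(n,p,q)=P(n,n,p,q)$. *)

(* Defs.v *)
From Stdlib Require Import Reals Lra Lia.
From Coquelicot Require Import Coquelicot.
Open Scope R_scope.

Definition binom_pmf (m : nat) (a : R) (k : nat) : R :=
  Binomial.C m k * a ^ k * (1 - a) ^ (m - k).

(* P(m,n,p,q) = Pr(Y >= X), X ~ Binom(m, max p q), Y ~ Binom(n, min p q)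
   independent:  sum over i = 0..m, j = 0..n with i <= j of
   Pr(X = i) Pr(Y = j). *)
Definition Pmn (m n : nat) (p q : R) : R :=
  sum_f_R0 (fun i =>
    sum_f_R0 (fun j =>
      if Nat.leb i j
      then binom_pmf m (Rmax p q) i * binom_pmf n (Rmin p q) j
      else 0) n) m.

Definition Pn (n : nat) (p q : R) : R := Pmn n n p q.

Definition nat_floor (x : R) : nat := Z.to_nat (Int_part x).

(* Main.v *)
Require Import Defs.
From Stdlib Require Import Reals Lra Lia ZArith.
From Coquelicot Require Import Coquelicot.
Open Scope R_scope.

Fixpoint sm (n : nat) (f : nat -> R) : R :=
  match n with O => 0 | S k => sm k f + f k end.

Lemma sm_ext n f g : (forall i, (i < n)%nat -> f i = g i) -> sm n f = sm n g.
Proof. induction n; simpl; intros H; auto. rewrite IHn by (intros; apply H; lia). rewrite H by lia; auto. Qed.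

Lemma sm_add n f g : sm n (fun i => f i + g i) = sm n f + sm n g.
Proof. induction n; simpl; [lra|]. rewrite IHn; ring. Qed.

Lemma sm_scal n c f : sm n (fun i => c * f i) = c * sm n f.
Proof. induction n; simpl; [ring|]. rewrite IHn; ring. Qed.

Lemma sm_le n f g : (forall i, (i < n)%nat -> f i <= g i) -> sm n f <= sm n g.
Proof. induction n; simpl; intros H; [lra|]. apply Rplus_le_compat; [apply IHn; intros; apply H; lia| apply H; lia]. Qed.

Lemma sm_zero n f : (forall i, (i < n)%nat -> f i = 0) -> sm n f = 0.
Proof. intros H. rewrite (sm_ext n f (fun _ => 0 * 1)) by (intros; rewrite H; auto; ring).
  rewrite sm_scal; ring. Qed.

Lemma sm_shift n f : sm (S n) f = f O + sm n (fun i => f (S i)).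
Proof. induction n; simpl in *; [ring|]. rewrite IHn; ring. Qed.

Lemma sum_f_R0_sm f n : sum_f_R0 f n = sm (S n) f.
Proof. induction n; simpl in *; [ring|]. rewrite IHn; simpl; ring. Qed.

Definition prv (g : nat -> R) (i : nat) : R := match i with O => 0 | S k => g k end.

Lemma sm_pre N h g : g N = 0 ->
  sm (S N) (fun j => h j * prv g j) = sm (S N) (fun j => h (S j) * g j).
Proof. intros H. rewrite sm_shift. simpl. rewrite H. ring. Qed.

Lemma sm_delta N k g : (k <= N)%nat ->
  sm (S N) (fun j => (if Nat.eqb j k then 1 else 0) * g j) = g k.
Proof.
  induction N; intros Hk.
  - simpl. assert (k = O) by lia. subst. simpl. ring.
  - destruct (Nat.eq_dec k (S N)).
    + subst. change (sm (S N) (fun j => (if Nat.eqb j (S N) then 1 else 0) * g j) +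
        (if Nat.eqb (S N) (S N) then 1 else 0) * g (S N) = g (S N)).
      rewrite sm_zero. rewrite Nat.eqb_refl. ring.
      intros i Hi. destruct (Nat.eqb_spec i (S N)); [lia| ring].
    + change (sm (S N) (fun j => (if Nat.eqb j k then 1 else 0) * g j) +
        (if Nat.eqb (S N) k then 1 else 0) * g (S N) = g k).
      rewrite IHN by lia. destruct (Nat.eqb_spec (S N) k); [lia|ring].
Qed.

Definition Ind (d : Z) (i j : nat) : R :=
  if Z.leb (Z.of_nat i + d) (Z.of_nat j) then 1 else 0.

Definition G N (y : nat -> R) d i := sm (S N) (fun j => Ind d i j * y j).
Definition TS N (x y : nat -> R) d := sm (S N) (fun i => x i * G N y d i).

Lemma I_Si d i j : Ind d (S i) j = Ind (d+1) i j.
Proof. unfold Ind. replace (Z.of_nat (S i) + d)%Z with (Z.of_nat i + (d+1))%Z by lia. auto. Qed.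
Lemma I_Sj d i j : Ind d i (S j) = Ind (d-1) i j.
Proof. unfold Ind. destruct (Z.leb_spec (Z.of_nat i + d) (Z.of_nat (S j)));
  destruct (Z.leb_spec (Z.of_nat i + (d-1)) (Z.of_nat j)); auto; lia. Qed.

Lemma G_Si N y d i : G N y d (S i) = G N y (d+1) i.
Proof. unfold G. apply sm_ext; intros; rewrite I_Si; auto. Qed.

Lemma G_pre N y d i B : y N = 0 ->
  G N (fun j => B * prv y j + (1-B) * y j) d i = B * G N y (d-1) i + (1-B) * G N y d i.
Proof.
  intros Hy. unfold G.
  rewrite (sm_ext _ _ (fun j => B * ((Ind d i j) * prv y j) + (1-B) * (Ind d i j * y j)))
    by (intros; ring).
  rewrite sm_add, !sm_scal. rewrite sm_pre by auto.
  f_equal. f_equal. apply sm_ext; intros; rewrite I_Sj; auto.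
Qed.

Lemma TS_rec N x y d A B : x N = 0 -> y N = 0 ->
  TS N (fun i => A * prv x i + (1-A) * x i) (fun j => B * prv y j + (1-B) * y j) d =
  B*(1-A) * TS N x y (d-1) + (A*B + (1-A)*(1-B)) * TS N x y d + A*(1-B) * TS N x y (d+1).
Proof.
  intros Hx Hy. unfold TS.
  set (H := fun i => B * G N y (d-1) i + (1-B) * G N y d i).
  rewrite (sm_ext _ _ (fun i => A * (H i * prv x i) + (1-A) * (x i * H i)))
    by (intros; unfold H; rewrite G_pre by auto; ring).
  rewrite sm_add, !sm_scal. rewrite (sm_pre N H x Hx).
  unfold H. rewrite <- !sm_scal, <- !sm_add. apply sm_ext; intros i _.
  rewrite !G_Si. replace (d - 1 + 1)%Z with d by ring. ring.
Qed.

Lemma TS_succ N x y d : x (S N) = 0 -> y (S N) = 0 -> TS (S N) x y d = TS N x y d.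
Proof.
  intros Hx Hy. unfold TS. change (sm (S N) (fun i => x i * G (S N) y d i) + x (S N) * G (S N) y d (S N) = sm (S N) (fun i => x i * G N y d i)).
  rewrite Hx, Rmult_0_l, Rplus_0_r. apply sm_ext; intros i _. unfold G.
  change (x i * (sm (S N) (fun j => Ind d i j * y j) + Ind d i (S N) * y (S N)) = x i * sm (S N) (fun j => Ind d i j * y j)).
  rewrite Hy; ring.
Qed.

Fixpoint bp (n : nat) (a : R) (i : nat) : R :=
  match n with
  | O => match i with O => 1 | S _ => 0 end
  | S n' => a * prv (bp n' a) i + (1 - a) * bp n' a i
  end.

Lemma bp_zero n a i : (n < i)%nat -> bp n a i = 0.
Proof.
  revert i; induction n; intros i Hi; simpl.
  - destruct i; [lia|auto].
  - destruct i; [lia|]. simpl. rewrite !IHn by lia. ring.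
Qed.

Lemma bp_closed n a i : (i <= n)%nat -> bp n a i = binom_pmf n a i.
Proof.
  unfold binom_pmf. revert i; induction n; intros i Hi.
  - assert (i = O) by lia; subst. simpl. rewrite C_n_0. ring.
  - simpl bp. destruct i.
    + simpl. rewrite IHn by lia. rewrite !C_n_0. simpl. rewrite Nat.sub_0_r. ring.
    + simpl prv. destruct (Nat.eq_dec i n).
      * subst. rewrite (bp_zero n a (S n)) by lia. rewrite IHn by lia.
        rewrite !C_n_n, !Nat.sub_diag. simpl. ring.
      * rewrite !IHn by lia. rewrite <- pascal by lia.
        replace (S n - S i)%nat with (n - i)%nat by lia.
        replace (n - i)%nat with (S (n - S i))%nat by lia. simpl. ring.
Qed.

Fixpoint T (u v w : R) (n : nat) (d : Z) : R :=
  match n with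
  | O => if Z.leb d 0 then 1 else 0
  | S n' => u * T u v w n' (d-1) + w * T u v w n' d + v * T u v w n' (d+1)
  end.

Section Params.
Variables A B : R.
Hypothesis hA : 0 <= A <= 1.
Hypothesis hB : 0 <= B <= 1.
Hypothesis hBA : B <= A.
Let u := B * (1 - A).
Let v := A * (1 - B).
Let w := A * B + (1-A) * (1-B).

Lemma T_TS n : forall N d, (n <= N)%nat -> T u v w n d = TS N (bp n A) (bp n B) d.
Proof.
  induction n; intros N d HN.
  - simpl. unfold TS. rewrite sm_shift. rewrite (sm_zero N (fun i => bp 0 A (S i) * _)) by (intros; simpl; ring).
    unfold G. rewrite sm_shift. rewrite sm_zero by (intros; simpl; ring).
    unfold Ind. simpl. destruct (Z.leb d 0); ring.
  - simpl T. rewrite !(IHn N) by lia.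
    change (bp (S n) A) with (fun i => A * prv (bp n A) i + (1-A) * bp n A i).
    change (bp (S n) B) with (fun i => B * prv (bp n B) i + (1-B) * bp n B i).
    rewrite TS_rec by (apply bp_zero; lia). unfold u, v, w. ring.
Qed.

Lemma T_bounds n : forall d, 0 <= T u v w n d <= 1.
Proof.
  assert (0 <= u) by (unfold u; nra). assert (0 <= v) by (unfold v; nra). assert (0 <= w) by (unfold w; nra).
  assert (u + v + w = 1) by (unfold u, v, w; ring).
  induction n; intros d; simpl.
  - destruct (Z.leb d 0); lra.
  - pose proof (IHn (d-1)%Z); pose proof (IHn d); pose proof (IHn (d+1)%Z). nra.
Qed.

Lemma T_mono_d n : forall d d', (d <= d')%Z -> T u v w n d' <= T u v w n d.
Proof.
  assert (0 <= u) by (unfold u; nra). assert (0 <= v) by (unfold v; nra). assert (0 <= w) by (unfold w; nra).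
  induction n; intros d d' Hd; simpl.
  - destruct (Z.leb_spec d' 0); destruct (Z.leb_spec d 0); lra || lia.
  - pose proof (IHn (d-1)%Z (d'-1)%Z ltac:(lia)); pose proof (IHn d d' Hd);
    pose proof (IHn (d+1)%Z (d'+1)%Z ltac:(lia)). nra.
Qed.

Lemma T_supermul r s : forall d1 d2, T u v w r d1 * T u v w s d2 <= T u v w (r + s) (d1 + d2).
Proof.
  assert (0 <= u) by (unfold u; nra). assert (0 <= v) by (unfold v; nra). assert (0 <= w) by (unfold w; nra).
  induction s; intros d1 d2.
  - rewrite Nat.add_0_r. simpl. pose proof (T_bounds r d1).
    destruct (Z.leb_spec d2 0).
    + rewrite Rmult_1_r. apply T_mono_d. lia.
    + pose proof (T_bounds r (d1 + d2)%Z). lra.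
  - rewrite Nat.add_succ_r. simpl T.
    pose proof (IHs d1 (d2-1)%Z); pose proof (IHs d1 d2); pose proof (IHs d1 (d2+1)%Z).
    replace (d1 + d2 - 1)%Z with (d1 + (d2-1))%Z by ring.
    replace (d1 + d2 + 1)%Z with (d1 + (d2+1))%Z by ring.
    pose proof (T_bounds r d1). nra.
Qed.

Lemma T_pow k m : (T u v w m 0) ^ k <= T u v w (k * m) 0.
Proof.
  induction k; simpl.
  - lra.
  - pose proof (T_supermul m (k*m) 0 0). simpl in H.
    pose proof (T_bounds m 0). nra.
Qed.

End Params.

Lemma sm_sub n f g : sm n (fun i => f i - g i) = sm n f - sm n g.
Proof. induction n; simpl; [ring|]. rewrite IHn; ring. Qed.

Lemma G_diff1 N y i : (i <= N)%nat -> G N y (-1) i - G N y 0 i = prv y i.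
Proof.
  intros Hi. unfold G. rewrite <- sm_sub. destruct i as [|k].
  - apply sm_zero. intros j _. unfold Ind.
    destruct (Z.leb_spec (Z.of_nat 0 + -1) (Z.of_nat j)); destruct (Z.leb_spec (Z.of_nat 0 + 0) (Z.of_nat j)); try lia; lra.
  - simpl prv. rewrite <- (sm_delta N k y) by lia. apply sm_ext. intros j _. unfold Ind.
    destruct (Z.leb_spec (Z.of_nat (S k) + -1) (Z.of_nat j)); destruct (Z.leb_spec (Z.of_nat (S k) + 0) (Z.of_nat j));
    destruct (Nat.eqb_spec j k); try lia; lra.
Qed.

Lemma G_diff0 N y i : (i <= N)%nat -> G N y 0 i - G N y 1 i = y i.
Proof.
  intros Hi. unfold G. rewrite <- sm_sub.
  rewrite <- (sm_delta N i y) by lia. apply sm_ext. intros j _. unfold Ind.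
    destruct (Z.leb_spec (Z.of_nat i + 0) (Z.of_nat j)); destruct (Z.leb_spec (Z.of_nat i + 1) (Z.of_nat j));
    destruct (Nat.eqb_spec j i); try lia; lra.
Qed.

Lemma TS_diff1 N x y : TS N x y (-1) - TS N x y 0 = sm (S N) (fun i => x i * prv y i).
Proof.
  unfold TS. rewrite <- sm_sub. apply sm_ext. intros i Hi.
  rewrite <- (G_diff1 N y i) by lia. ring.
Qed.

Lemma TS_diff0 N x y : TS N x y 0 - TS N x y 1 = sm (S N) (fun i => x i * y i).
Proof.
  unfold TS. rewrite <- sm_sub. apply sm_ext. intros i Hi.
  rewrite <- (G_diff0 N y i) by lia. ring.
Qed.

Lemma sqrt_free w z : 0 <= w -> 0 <= z -> w * w <= z * z -> w <= z.
Proof. intros. destruct (Rle_or_lt w z); auto. nra. Qed.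

Lemma amgm M (x y : nat -> R) u v :
  (forall i, 0 <= x i) -> (forall i, 0 <= y i) -> 0 <= u <= v ->
  (forall i, u * x (S i) * y i = v * x i * y (S i)) -> x M = 0 ->
  u * sm M (fun i => x (S i) * y i) <= v * sm M (fun i => x i * y i).
Proof.
  intros Hx Hy Huv Hid HM.
  set (p := fun i => x i * y i).
  assert (Hp : forall i, 0 <= p i) by (intros; unfold p; apply Rmult_le_pos; auto).
  assert (Hpt : forall i, u * (x (S i) * y i) <= v / 2 * (p i + p (S i))).
  { intros i. apply sqrt_free.
    - pose proof (Hx (S i)); pose proof (Hy i). apply Rmult_le_pos; [lra|]. apply Rmult_le_pos; auto.
    - pose proof (Hp i); pose proof (Hp (S i)). apply Rmult_le_pos; lra.
    - assert (E : u * (x (S i) * y i) * (u * (x (S i) * y i)) = u * v * (p i * p (S i))).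
      { unfold p. transitivity ((u * x (S i) * y i) * (u * x (S i) * y i)); [ring|].
        rewrite Hid at 2. ring. }
      rewrite E. pose proof (Hp i); pose proof (Hp (S i)).
      assert (u * v * (p i * p (S i)) <= v * v * (p i * p (S i))).
      { apply Rmult_le_compat_r; [apply Rmult_le_pos; auto|]. nra. }
      assert (v * v * (p i * p (S i)) <= v / 2 * (p i + p (S i)) * (v / 2 * (p i + p (S i)))).
      { assert (0 <= v * v * ((p i - p (S i)) * (p i - p (S i)))).
        { apply Rmult_le_pos; [pose proof (Rle_0_sqr v) | pose proof (Rle_0_sqr (p i - p (S i)))]; unfold Rsqr in *; lra. }
        assert (v / 2 * (p i + p (S i)) * (v / 2 * (p i + p (S i))) - v * v * (p i * p (S i)) =
          v * v * ((p i - p (S i)) * (p i - p (S i))) / 4) by field. lra. }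
      lra. }
  rewrite <- sm_scal.
  apply Rle_trans with (sm M (fun i => v / 2 * (p i + p (S i)))).
  { apply sm_le; intros; auto. }
  rewrite sm_scal, sm_add.
  assert (sm M (fun i => p (S i)) <= sm M p).
  { pose proof (sm_shift M p). simpl in H. assert (p M = 0) by (unfold p; rewrite HM; ring).
    pose proof (Hp 0%nat). lra. }
  assert (0 <= sm M p) by (apply Rle_trans with (sm M (fun _ => 0)); [rewrite sm_zero; auto; lra| apply sm_le; auto]).
  fold p. nra.
Qed.

Lemma bp_nonneg n a i : 0 <= a <= 1 -> 0 <= bp n a i.
Proof.
  intros Ha. revert i; induction n; intros i; simpl.
  - destruct i; lra.
  - destruct i as [|k]; simpl; [pose proof (IHn 0%nat) | pose proof (IHn k); pose proof (IHn (S k))]; nra.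
Qed.

Lemma bp_id n A B i :
  B * (1 - A) * bp n A (S i) * bp n B i = A * (1 - B) * bp n A i * bp n B (S i).
Proof.
  destruct (le_lt_dec (S i) n).
  - rewrite !bp_closed by lia. unfold binom_pmf.
    replace (n - i)%nat with (S (n - S i))%nat by lia. simpl. ring.
  - rewrite !(bp_zero n _ (S i)) by lia. ring.
Qed.

Section Params2.
Variables A B : R.
Hypothesis hA : 0 <= A <= 1.
Hypothesis hB : 0 <= B <= 1.
Hypothesis hBA : B <= A.
Let u := B * (1 - A).
Let v := A * (1 - B).
Let w := A * B + (1-A) * (1-B).

Lemma T_mono_step n : T u v w (S n) 0 <= T u v w n 0.
Proof.
  change (T u v w (S n) 0) with (u * T u v w n (-1) + w * T u v w n 0 + v * T u v w n 1).
  assert (E1 : T u v w n (-1) - T u v w n 0 = sm (S (S n)) (fun i => bp n A (S i) * bp n B i)).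
  { unfold u, v, w. rewrite !(T_TS A B n (S n)) by lia. rewrite TS_diff1.
    apply sm_pre. apply bp_zero; lia. }
  assert (E0 : T u v w n 0 - T u v w n 1 = sm (S (S n)) (fun i => bp n A i * bp n B i)).
  { unfold u, v, w. rewrite !(T_TS A B n (S n)) by lia. apply TS_diff0. }
  assert (Hm : u * sm (S (S n)) (fun i => bp n A (S i) * bp n B i) <=
               v * sm (S (S n)) (fun i => bp n A i * bp n B i)).
  { apply amgm.
    - intros; apply bp_nonneg; auto.
    - intros; apply bp_nonneg; auto.
    - unfold u, v; split; nra.
    - intros; apply bp_id.
    - apply bp_zero; lia. }
  assert (u + v + w = 1) by (unfold u, v, w; ring). nra.
Qed.

Lemma T_mono_n m m' : (m <= m')%nat -> T u v w m' 0 <= T u v w m 0.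
Proof.
  induction 1; [lra|]. pose proof (T_mono_step m0). lra.
Qed.

End Params2.

Lemma Pn_T m p q : Pn m p q =
  T (Rmin p q * (1 - Rmax p q)) (Rmax p q * (1 - Rmin p q))
    (Rmax p q * Rmin p q + (1 - Rmax p q) * (1 - Rmin p q)) m 0.
Proof.
  rewrite (T_TS (Rmax p q) (Rmin p q) m m) by lia.
  unfold Pn, Pmn, TS, G. rewrite sum_f_R0_sm. apply sm_ext. intros i Hi.
  rewrite sum_f_R0_sm. rewrite <- sm_scal. apply sm_ext. intros j Hj.
  rewrite !bp_closed by lia. unfold Ind.
  destruct (Nat.leb_spec i j); destruct (Z.leb_spec (Z.of_nat i + 0) (Z.of_nat j)); try lia; ring.
Qed.

Lemma nat_floor_ge x : 0 <= x -> x - 1 < INR (nat_floor x).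
Proof.
  intros Hx. unfold nat_floor. destruct (base_Int_part x) as [H1 H2].
  assert (Hz : (0 <= Int_part x)%Z).
  { assert (IZR (-1) < IZR (Int_part x)) by (simpl; lra). apply lt_IZR in H. lia. }
  rewrite INR_IZR_INZ, Z2Nat.id by exact Hz. lra.
Qed.

Theorem lemma4p4 (p q : nat -> R)
  (hp : forall n, 0 <= p n <= 1) (hq : forall n, 0 <= q n <= 1)
  (ho : is_lim_seq (fun n => INR n * Pn n (p n) (q n)) 0)
  (alpha : R) (halpha : 0 < alpha) :
  is_lim_seq (fun n => Pn (nat_floor (alpha * INR n)) (p n) (q n)) 0.
Proof.
  apply is_lim_seq_spec. apply is_lim_seq_spec in ho.
  intros eps.
  destruct (INR_unbounded (2 / alpha)) as [k Hk].
  assert (Hk1 : (1 <= k)%nat).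
  { destruct k; [simpl in Hk; assert (0 < 2 / alpha) by (apply Rdiv_lt_0_compat; lra); lra | lia]. }
  assert (Hka : 2 <= INR k * alpha).
  { apply Rmult_lt_compat_r with (r := alpha) in Hk; auto.
    unfold Rdiv in Hk. rewrite Rmult_assoc, Rinv_l in Hk by lra. lra. }
  assert (Hek : 0 < pos eps ^ k) by (apply pow_lt; apply cond_pos).
  destruct (ho (mkposreal _ Hek)) as [N0 HN0].
  exists (Nat.max N0 k). intros n Hn.
  simpl in HN0. specialize (HN0 n ltac:(lia)).
  set (A := Rmax (p n) (q n)). set (B := Rmin (p n) (q n)).
  assert (hA : 0 <= A <= 1) by (unfold A; destruct (hp n), (hq n); unfold Rmax; destruct Rle_dec; lra).
  assert (hB : 0 <= B <= 1) by (unfold B; destruct (hp n), (hq n); unfold Rmin; destruct Rle_dec; lra).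
  assert (hBA : B <= A) by (unfold A, B; unfold Rmax, Rmin; destruct Rle_dec; lra).
  set (m := nat_floor (alpha * INR n)).
  rewrite !Pn_T in *. fold A B in HN0 |- *.
  set (TT := T (B * (1 - A)) (A * (1 - B)) (A * B + (1 - A) * (1 - B))) in *.
  assert (Hb : forall r d, 0 <= TT r d <= 1) by (intros; apply T_bounds; auto).
  assert (Hnk : (n <= k * m)%nat).
  { apply INR_le. rewrite mult_INR.
    assert (0 <= alpha * INR n) by (apply Rmult_le_pos; [lra| apply pos_INR]).
    pose proof (nat_floor_ge _ H). fold m in H0.
    assert (INR k <= INR n) by (apply le_INR; lia).
    pose proof (pos_INR k). pose proof (pos_INR n).
    assert (INR k * (alpha * INR n - 1) <= INR k * INR m) by (apply Rmult_le_compat_l; lra).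
    nra. }
  assert (H1 : TT m 0%Z ^ k <= TT (k * m)%nat 0%Z) by (apply T_pow; auto).
  assert (H2 : TT (k * m)%nat 0%Z <= TT n 0%Z) by (apply T_mono_n; auto).
  assert (H3 : TT n 0%Z < eps ^ k).
  { assert (1 <= INR n) by (apply (le_INR 1); lia).
    pose proof (Hb n 0%Z). rewrite Rminus_0_r, Rabs_pos_eq in HN0 by nra. nra. }
  rewrite Rminus_0_r, Rabs_pos_eq by apply Hb.
  destruct (Rlt_or_le (TT m 0%Z) eps) as [Hl|Hl]; auto.
  assert (eps ^ k <= TT m 0%Z ^ k) by (apply pow_incr; pose proof (cond_pos eps); lra).
  lra.
Qed.
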